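(* Let $(a_m)_{m\ge0}$ be defined by $a_0=a_1=1$ and $a_{m+1}=-1+\sum_{p=0}^{m}a_pa_{m-p}$ for $m\ge1$ (OEIS A176677). For any $x,y\in\{0,1\}$, the tree pattern $(P,e)=(12435,10xy)$ satisfies $|\mathcal{T}_n(P,e)|=a_{n+1}$ for all $n\ge0$; i.e., the class $\mathcal{T}_n(12435,10\text{-}\text{-})$ is counted by OEIS A176677.
   Context: $\mathcal{T}_n$ is the set of binary trees on $n$ vertices labeled $1,\dots,n$ by the search tree property; $\mathcal{T}_0=\{\varepsilon\}$. $c_L,c_R,p$: left child, right child, parent. A tree pattern is $(P,e)$, $P\in\mathcal{T}_k$, $e\colon[k]\setminus\{\text{root}\}\to\{0,1\}$ ($e(i)=1$: edge to parent contiguous; $0$: non-contiguous). $T\in\mathcal{T}_n$ contains $(P,e)$ if there is an injection $f\colon[k]\to[n]$ such that for every non-root $i$ of $P$: if $e(i)=1$, $f(i)$ is the left (resp. right) child of $f(p(i))$ when $i$ is the left (resp. right) child of $p(i)$; if $e(i)=0$, $f(i)$ lies in the left (resp. right) subtree of $f(p(i))$. $\mathcal{T}_n(P,e)$ is the set of avoiders. Compact notation: $(\tau_1\cdots\tau_k,\,x_2\cdots x_k)$ denotes the pattern whose preorder vertex sequence (root, then left subtree recursively, then right subtree recursively) is $\tau_1,\dots,\tau_k$ and with $e(\tau_j)=x_j$; thus $(12435,10xy)$ is the tree with root 1, right child 2 of 1, right child 4 of 2, left child 3 and right child 5 of 4, with $e(2)=1$, $e(4)=0$, $e(3)=x$,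 $e(5)=y$. *)

(* Defs.v *)
From mathcomp Require Import all_boot all_order all_algebra.
From Stdlib Require Import List.
Set Implicit Arguments. Unset Strict Implicit. Unset Printing Implicit Defensive.

(* A binary tree on n vertices labeled 1..n by the
   search tree property is determined by its shape (labels = in-order
   ranks), so T_n is in bijection with shapes with n nodes.  Vertices are
   identified with their addresses: the root-to-vertex path, a list of
   booleans (false = go to left child, true = go to right child). *)
Inductive bt : Type := Lf | Nd (l r : bt).

Fixpoint bt_size (t : bt) : nat :=
  match t with Lf => 0 | Nd l r => (bt_size l + bt_size r).+1 end.

Fixpoint isnode (t : bt) (p : list bool) : Prop :=
  match t, p with
  | Lf, _ => False
  | Nd _ _, nil => True
  | Nd l r, b :: q => isnode (if b then r else l) q
  end.

(* Tree pattern (P, e): e assigns to each non-root vertex of P (given by its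
   address) 1 (true, contiguous edge) or 0 (false, non-contiguous edge).
   A non-root vertex of P has address q ++ [b]: it is the b-child of q. *)
Definition contains (T P : bt) (e : list bool -> bool) : Prop :=
  exists f : list bool -> list bool,
    (forall i, isnode P i -> isnode T (f i)) /\
    (forall i j, isnode P i -> isnode P j -> f i = f j -> i = j) /\
    (forall q b, isnode P (q ++ b :: nil) ->
       if e (q ++ b :: nil) then f (q ++ b :: nil) = f q ++ b :: nil
       else exists s, f (q ++ b :: nil) = f q ++ b :: s).

Definition avoids (T P : bt) (e : list bool -> bool) : Prop := ~ contains T P e.

(* The pattern tree 12435: root 1, right child 2, right child 4 of 2,
   left child 3 and right child 5 of 4. *)
Definition P12435 : bt := Nd Lf (Nd Lf (Nd (Nd Lf Lf) (Nd Lf Lf))).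

(* Edge labels 10xy: e(2)=1, e(4)=0, e(3)=x, e(5)=y.
   Vertex addresses: 2 = [R], 4 = [R;R], 3 = [R;R;L], 5 = [R;R;R].
   (The value on non-vertices is irrelevant.) *)
Definition e10xy (x y : bool) (i : list bool) : bool :=
  match i with
  | true :: nil => true
  | true :: true :: nil => false
  | true :: true :: false :: nil => x
  | true :: true :: true :: nil => y
  | _ => false
  end.

(* Main.v *)
Require Import Defs.
From mathcomp Require Import all_boot all_order all_algebra.
From Stdlib Require Import List.
Import GRing.Theory Num.Theory.
From HB Require Import structures.
From mathcomp Require Import zify.
Import seq.

Definition bt_eq_dec (x y : bt) : {x = y} + {x <> y}. Proof. decide equality. Defined.
HB.instance Definition _ := hasDecEq.Build bt (compareP bt_eq_dec).

Lemma InP (T : eqType) (x : T) s : List.In x s <-> x \in s.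
Proof.
elim: s => [|y s IH] /=; first by split.
rewrite in_cons; split.
  by case=> [->|/IH ->]; rewrite ?eqxx ?orbT.
by case/orP=> [/eqP ->|/IH]; [left|right].
Qed.

Lemma uniq_NoDup (T : eqType) (s : seq T) : uniq s -> List.NoDup s.
Proof.
elim: s => [|y s IH] /=; first by constructor.
case/andP=> ny us; constructor; last exact: IH.
by move/InP; apply/negP.
Qed.

Definition trS (g : nat -> seq bt) m :=
  flatten [seq [seq Nd l r | l <- g k, r <- g (m - k)] | k <- iota 0 m.+1].
Fixpoint tr (f n : nat) : seq bt :=
  match f with 0 => [::] | f'.+1 =>
   match n with 0 => [:: Lf] | m.+1 => trS (tr f') m end end.
Lemma trE f m : tr f.+1 m.+1 = trS (tr f) m. Proof. by []. Qed.

Lemma tr_fuel f1 f2 n : (n < f1)%N -> (n < f2)%N -> tr f1 n = tr f2 n.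
Proof.
elim: f1 f2 n => [|f1 IH] [|f2] [|m] // h1 h2.
rewrite !trE /trS; congr flatten; apply/eq_in_map => k; rewrite mem_iota add0n => /andP[_ hk].
rewrite (IH f2 k) ?(IH f2 (m - k)) //; apply: leq_ltn_trans (_ : m < _)%N => //;
 by rewrite ?leq_subr // -ltnS.
Qed.

Definition cnt (p : pred bt) n := count p (tr n.+1 n).

Lemma count_allpairs (P p q : pred bt) s1 s2 :
  (forall l r, P (Nd l r) = p l && q r) ->
  count P [seq Nd l r | l <- s1, r <- s2] = count p s1 * count q s2.
Proof.
move=> HP; elim: s1 => [|l s1 IH] //=.
rewrite count_cat IH count_map mulnDl; congr (_ + _).
case pl: (p l); rewrite ?mul1n ?mul0n.
  by apply: eq_count => r /=; rewrite HP pl.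
by rewrite (eq_count (a2 := pred0)) ?count_pred0 // => r /=; rewrite HP pl.
Qed.

Lemma cnt0 p : cnt p 0 = p Lf.
Proof. by rewrite /cnt /=; case: (p Lf). Qed.

Lemma cntS (P p q : pred bt) n :
  (forall l r, P (Nd l r) = p l && q r) ->
  cnt P n.+1 = \sum_(k < n.+1) cnt p k * cnt q (n - k).
Proof.
move=> HP; rewrite /cnt trE /trS count_flatten sumnE big_map -(big_mkord xpredT (fun k => cnt p k * cnt q (n - k))).
rewrite big_map; apply: eq_big_seq => k; rewrite mem_iota add0n => /andP[_ hk].
rewrite (@count_allpairs P p q) // /cnt; rewrite (@tr_fuel n.+1 k.+1 k) ?(@tr_fuel n.+1 (n-k).+1 (n - k)) //.
by rewrite ltnS leq_subr.
Qed.


Definition isLf (t : bt) := if t is Lf then true else false.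
Fixpoint nofull (t : bt) : bool :=
  match t with Lf => true
  | Nd l r => (isLf l && nofull r) || ((~~ isLf l && nofull l) && isLf r) end.
Fixpoint av (t : bt) : bool :=
  match t with Lf => true
  | Nd l r => av l && (match r with Lf => true | Nd rl rr => av rl && nofull rr end) end.
Definition rp (r : bt) := match r with Lf => true | Nd rl rr => av rl && nofull rr end.

Definition full T w := isnode T (w ++ [:: false]) /\ isnode T (w ++ [:: true]).
Definition occ T := exists u s, isnode T (u ++ [:: true]) /\ full T (u ++ true :: true :: s).

Lemma isnode_prefix t p q : isnode t (p ++ q) -> isnode t p.
Proof.
elim: t p => [|l IHl r IHr] [|b p] //=; case: b; [exact: IHr | exact: IHl].
Qed.

Lemma hasfullP T : (exists w, full T w) <-> nofull T = false.
Proof.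
elim: T => [|l IHl r IHr]; first by split => //; case=> w [].
split.
  case=> [[|b w]].
    by case: l IHl => [|ll lr] IHl; case: r IHr => [|rl rr] IHr; rewrite /full /= ?andbF; try tauto.
  case: b => hw.
    have hr : nofull r = false by apply/IHr; exists w.
    by case: r IHr hr {hw} => //= rl rr _ ->; rewrite !andbF.
  have hl : nofull l = false by apply/IHl; exists w.
  by case: l IHl hl {hw} => //= ll lr _ ->.
case: l IHl => [|ll lr] IHl.
  move=> h; have /IHr [w hw] : nofull r = false by move: h => /=; rewrite orbF.
  by exists (true :: w).
case: r IHr => [|rl rr] IHr; last by move=> _; exists [::].
move=> h; have /IHl [w hw] : nofull (Nd ll lr) = false by move: h => /=; rewrite andbT.
by exists (false :: w).
Qed.

Lemma occ_full T : occ T -> exists w, full T w.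
Proof. by case=> u [s [_ h]]; exists (u ++ true :: true :: s). Qed.

Lemma occ_Nd l r : occ (Nd l r) <->
  occ l \/ occ r \/ (exists rl rr, r = Nd rl rr /\ exists w, full rr w).
Proof.
split.
  case=> [[|[] u]] [s [hu hf]].
  - case: r hu hf => [|rl rr] //= _ hf; right; right; exists rl, rr; split => //.
    by exists s.
  - by right; left; exists u, s.
  - by left; exists u, s.
case=> [[u [s h]]|[[u [s h]]|[rl [rr [-> [w hw]]]]]].
- by exists (false :: u), s.
- by exists (true :: u), s.
- by exists [::], w.
Qed.

Lemma nofull_sub l r : nofull (Nd l r) -> nofull l && nofull r.
Proof.
by case: l => [|ll lr]; case: r => [|rl rr] //=; rewrite ?andbT ?andbF ?orbF.
Qed.

Lemma nofull_av t : nofull t -> av t.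
Proof.
elim: t => [|l IHl r IHr] //= h; have /andP[hl hr] := @nofull_sub _ _ h.
rewrite IHl //=; case: r IHr h hr => [|rl rr] //= IHr h hr.
have /andP[h1 h2] := @nofull_sub _ _ hr.
by rewrite h2 andbT; have := IHr hr => /andP[].
Qed.

Lemma nofull_rp t : nofull t -> rp t.
Proof.
case: t => [|l r] //= /nofull_sub /andP[hl hr].
by rewrite hr nofull_av.
Qed.

Lemma occP T : occ T <-> av T = false.
Proof.
elim: T => [|l IHl r IHr]; first by split => //; case=> u [s [h _]].
rewrite occ_Nd /=.
case: r IHr => [|rl rr] IHr.
  rewrite andbT -IHl; split; last by left.
  by case=> [//|[[u [s [h _]]]|[rl [rr [h _]]]]].
change (av (Nd rl rr)) with (av rl && rp rr) in IHr.
split.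
  case=> [/IHl -> //|[/IHr h|[rl' [rr' [[_ <-] /hasfullP ->]]]]]; last by rewrite !andbF.
  case hav: (av rl) h => //= h; last by rewrite andbF.
  case hn: (nofull rr); last by rewrite !andbF.
  by rewrite nofull_rp in h.
case hl: (av l) => /=; last by left; apply/IHl.
move=> h; right.
case hn: (nofull rr) h; last by move=> _; right; exists rl, rr; split => //; apply/hasfullP.
rewrite andbT => h; left; apply/IHr; by rewrite h.
Qed.


Lemma nodesP i : isnode P12435 i ->
  i = [::] \/ i = [:: true] \/ i = [:: true; true] \/ i = [:: true; true; false]
    \/ i = [:: true; true; true].
Proof.
case: i => [|[] [|[] [|[] [|b i]]]] //=; try by case: b.
all: move=> _; do ?[by left|right]; done.
Qed.

Lemma appE (A : Type) (s t : list A) : (s ++ t)%list = s ++ t.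
Proof. by elim: s => //= a s ->. Qed.

Lemma contains_occ T x y : contains T P12435 (e10xy x y) <-> occ T.
Proof.
split.
  case=> f [hn [_ hc]].
  have h1 := hc [::] true I.
  have h2 := hc [:: true] true I.
  have h3 := hc [:: true; true] false I.
  have h4 := hc [:: true; true] true I.
  have n3 := hn [:: true; true; false] I.
  have n4 := hn [:: true; true; true] I.
  have n1 := hn [:: true] I.
  simpl in h1, h2, h3, h4; rewrite ?appE in h1 h2 h3 h4.
  case: h2 => s hs.
  exists (f [::]), s; split; first by rewrite -h1.
  have ew : f [:: true; true] = f [::] ++ true :: true :: s by rewrite hs appE h1 -catA.
  rewrite -ew; split.
    case: x {hc} h3 => [h3|[s' h3]]; rewrite ?appE in h3; rewrite h3 in n3 => //.
    by apply: (@isnode_prefix _ _ s'); rewrite -catA.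
  case: y {hc} h4 => [h4|[s' h4]]; rewrite ?appE in h4; rewrite h4 in n4 => //.
  by apply: (@isnode_prefix _ _ s'); rewrite -catA.
case=> u [s [hu [hl hr]]].
set w := u ++ true :: true :: s in hl hr.
pose f (i : seq bool) := if i == [::] then u else if i == [:: true] then u ++ [:: true]
  else if i == [:: true; true] then w else if i == [:: true; true; false] then w ++ [:: false]
  else w ++ [:: true].
exists f; split; [|split].
- move=> i /nodesP [|[|[|[|]]]] -> //=; rewrite /f /=.
  + exact: (@isnode_prefix _ _ [:: true]).
  + exact: (@isnode_prefix _ _ [:: false]).
- move=> i j /nodesP hi /nodesP hj; rewrite /f.
  case: hi => [|[|[|[|]]]] ->; case: hj => [|[|[|[|]]]] -> //= E; have := congr1 size E;
  rewrite /w ?size_cat /= ?addnS ?addn0 //.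
  all: try lia.
  1,2: by move=> _; have := congr1 (last true) E; rewrite !last_cat.
- move=> q b; case: q => [|[] [|[] [|[] [|b' q]]]]; case: b => //=; try by case: b'.
  all: move=> _; rewrite /f /=.
  + by exists s; rewrite appE /w -catA.
  + by case: y; rewrite ?appE //; exists [::]; rewrite appE.
  + by case: x; rewrite ?appE //; exists [::]; rewrite appE.
Qed.


Lemma cnt_pred1 T n : cnt (pred1 T) n = (bt_size T == n).
Proof.
elim: T n => [|l IHl r IHr] [|n].
- by rewrite cnt0.
- rewrite (@cntS _ pred0 pred0) // big1 // => k _.
  by rewrite /cnt count_pred0.
- by rewrite cnt0.
- rewrite (@cntS _ (pred1 l) (pred1 r)); last first.
    move=> l' r' /=; apply/eqP/andP => [[-> ->]|[/eqP -> /eqP ->]] //.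
  under eq_bigr => k _ do rewrite IHl IHr.
  rewrite /= eqSS.
  case: (ltnP (bt_size l) n.+1) => h.
    rewrite (bigD1 (Ordinal h)) //= eqxx mul1n big1 ?addn0.
      by apply/eqP/eqP; lia.
    move=> k hk; case: eqP => // e; exfalso; move/eqP: hk; apply; apply/val_inj.
    by rewrite /= e.
  rewrite big1; first by apply/esym/eqP; lia.
  move=> k _; case: eqP => // e; have := ltn_ord k; lia.
Qed.

Lemma mem_tr T n : (T \in tr n.+1 n) = (bt_size T == n).
Proof.
have := cnt_pred1 T n; rewrite /cnt => hc.
by rewrite -has_pred1 has_count hc; case: eqP.
Qed.

Lemma uniq_tr n : uniq (tr n.+1 n).
Proof.
apply: count_mem_uniq => T; rewrite mem_tr.
by have := cnt_pred1 T n; rewrite /cnt.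
Qed.

Definition A k := cnt av k.
Definition G k := cnt nofull k.
Definition R k := cnt rp k.
Definition H m := \sum_(j < m.+1) A j * G (m - j).
Definition S n := \sum_(k < n.+1) A k * H (n - k).
Definition Q n := \sum_(k < n.+1) A k * A (n - k).

Lemma A0 : A 0 = 1. Proof. by rewrite /A cnt0. Qed.
Lemma G0 : G 0 = 1. Proof. by rewrite /G cnt0. Qed.
Lemma R0 : R 0 = 1. Proof. by rewrite /R cnt0. Qed.
Lemma A_S n : A n.+1 = \sum_(k < n.+1) A k * R (n - k).
Proof. by rewrite /A (@cntS _ av rp). Qed.
Lemma R_S m : R m.+1 = H m.
Proof. by rewrite /R (@cntS _ av nofull). Qed.

Lemma isLfE t : isLf t = (t == Lf). Proof. by case: t. Qed.

Definition na (t : bt) := if t is Nd l r then (l == Lf) && nofull r else false.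
Definition nbl (t : bt) := (t != Lf) && nofull t.
Definition nb (t : bt) := if t is Nd l r then nbl l && (r == Lf) else false.

Lemma cnt_Lf k : cnt (pred1 Lf) k = (0 == k).
Proof. by rewrite cnt_pred1. Qed.

Lemma G_rec n : G n.+1 + (n == 0) = 2 * G n.
Proof.
have e1 : G n.+1 = cnt na n.+1 + cnt nb n.+1.
  rewrite /G /cnt -count_predUI (@eq_count _ (predI na nb) pred0); last first.
    by case=> [|[|? ?] r] //=; rewrite andbF.
  rewrite count_pred0 addn0; apply: eq_in_count => t; rewrite mem_tr.
  case: t => [|l r] //= _; rewrite !isLfE.
  by case: l => [|? ?] //=; rewrite /nbl /= ?andbT ?orbF.
have e2 : cnt na n.+1 = G n.
  rewrite (@cntS _ (pred1 Lf) nofull) // big_ord_recl /= cnt_Lf subn0 mul1n big1 ?addn0 //.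
  by move=> k _; rewrite cnt_Lf.
have e3 : cnt nb n.+1 = cnt nbl n.
  rewrite (@cntS _ nbl (pred1 Lf)) // big_ord_recr /= cnt_Lf subnn muln1 big1 ?add0n //.
  by move=> k _; rewrite cnt_Lf /=; case: eqP => //; have := ltn_ord k; lia.
have e4 : cnt nbl n + (0 == n) = G n.
  rewrite -cnt_Lf /G /cnt -count_predUI (@eq_count _ (predI nbl (pred1 Lf)) pred0); last first.
    by case=> [|l r] //=; rewrite /nbl /= ?andbF.
  rewrite count_pred0 addn0; apply: eq_count => t /=; rewrite /nbl.
  by case: t => [|l r] //=; rewrite orbF.
by rewrite e1 e2 e3 -addnA eq_sym e4 mul2n addnn.
Qed.

Lemma sum_delta_last (F : nat -> nat) m :
  \sum_(j < m.+1) F j * ((m - j) == 0) = F m.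
Proof.
rewrite big_ord_recr /= subnn muln1 big1 ?add0n // => j _.
by rewrite subn_eq0 leqNgt ltn_ord muln0.
Qed.

Lemma H_rec m : H m.+1 + A m = A m.+1 + 2 * H m.
Proof.
rewrite /H big_ord_recr /= subnn G0 muln1 -(sum_delta_last A m) addnAC -big_split /=.
rewrite addnC; congr (_ + _); rewrite big_distrr; apply: eq_bigr => j _ /=.
rewrite subSn; last by rewrite -ltnS.
rewrite -mulnDr G_rec; lia.
Qed.

Lemma A_rec n : A n.+2 = A n.+1 + S n.
Proof.
rewrite A_S big_ord_recr /= subnn R0 muln1 addnC; congr (_ + _).
apply: eq_bigr => k _ /=; rewrite subSn ?R_S //; by rewrite -ltnS.
Qed.

Lemma H0 : H 0 = 1. Proof. by rewrite /H big_ord1 A0 G0. Qed.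

Lemma S_rec n : S n.+1 + Q n = Q n.+1 + 2 * S n.
Proof.
rewrite /S /Q big_ord_recr [X in _ = X + _]big_ord_recr /= !subnn H0 A0 !muln1.
rewrite addnAC -big_split /= [RHS]addnAC; congr (_ + _).
rewrite addnC big_distrr -big_split; apply: eq_bigr => k _ /=.
rewrite !subSn; try by rewrite -ltnS.
rewrite -mulnDr H_rec; lia.
Qed.

Lemma A1 : A 1 = 1. Proof. by rewrite A_S big_ord1 A0 R0. Qed.

Lemma inv n : S n + 1 = Q n + A n.+1.
Proof.
elim: n => [|n IH].
  by rewrite /S /Q !big_ord1 A0 H0 A1.
have := S_rec n; have := A_rec n; lia.
Qed.

Lemma main_rec n : A n.+2 + 1 = 2 * A n.+1 + Q n.
Proof. have := inv n; have := A_rec n; lia. Qed.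

Local Open Scope ring_scope.

Lemma Posz_sum k (F : 'I_k -> nat) : Posz (\sum_(i < k) F i)%N = \sum_(i < k) Posz (F i).
Proof. exact: (big_morph Posz PoszD (erefl _)). Qed.

Lemma a_eq (a : nat -> int)
  (ha0 : a 0%N = 1) (ha1 : a 1%N = 1)
  (harec : forall m : nat, (1 <= m)%N ->
     a m.+1 = -1 + \sum_(0 <= p < m.+1) a p * a (m - p)%N) n :
  a n.+1 = Posz (A n).
Proof.
suff : forall k, (k <= n)%N -> a k.+1 = Posz (A k) by apply.
elim: n => [|n IH] k hk.
  by have -> : k = 0%N by lia. 
case: (ltnP k n.+1) => hk'; first by apply: IH.
have -> : k = n.+1 by lia.
case: n IH {hk hk' k} => [|m] IH.
  rewrite harec // big_mkord !big_ord_recr big_ord0 /= ha0 ha1 A1; by [].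
rewrite harec // big_mkord big_ord_recl big_ord_recr /= subn0 subnn.
have h := congr1 Posz (main_rec m); rewrite !PoszD in h.
rewrite ha0 IH // mul1r mulr1.
have -> : \sum_(i < m.+1) a (bump 0 (widen_ord (leqnSn m.+1) i)) * a (m.+2 - bump 0 (widen_ord (leqnSn m.+1) i))%N
   = Posz (Q m).
  rewrite /Q Posz_sum; apply: eq_bigr => i _; rewrite /bump /= add1n subSS subSn; last by rewrite -ltnS.
  rewrite !IH ?PoszM //; first by rewrite ltnW // ltnS leq_subr.
  by rewrite ltnW // ltnS.
lia.
Qed.

Lemma lengthE (X : Type) (s : list X) : List.length s = size s.
Proof. by elim: s => //= ? ? ->. Qed.

Theorem lemma23 (a : nat -> int)
  (ha0 : a 0%N = 1) (ha1 : a 1%N = 1)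
  (harec : forall m : nat, (1 <= m)%N ->
     a m.+1 = -1 + \sum_(0 <= p < m.+1) a p * a (m - p)%N)
  (x y : bool) (n : nat) :
  exists s : list bt,
    List.NoDup s /\
    (forall T : bt, List.In T s <-> (bt_size T = n /\ avoids T P12435 (e10xy x y))) /\
    (Posz (List.length s) = a n.+1).
Proof.
exists (filter av (tr n.+1 n)); split; [|split].
- by apply: uniq_NoDup; rewrite filter_uniq // uniq_tr.
- move=> T; rewrite InP mem_filter mem_tr /avoids contains_occ occP.
  split.
    by case/andP=> -> /eqP ->.
  by case=> -> h; rewrite eqxx andbT; case: (av T) h.
- by rewrite lengthE size_filter (@a_eq a ha0 ha1 harec).
Qed.
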